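(* Let $M$ be a monoid with zero and let $I$ be an rf-compatible ideal of $M$ such that $N=(M\setminus I)\cup\{0\}$ is a submonoid of $M$. Then $M$ is residually finite if and only if $N$ is residually finite.
   Context: An ideal $I$ of a monoid $M$ is rf-compatible with $M$ if for any two distinct $s,t\in I$ there is a congruence $\rho$ of finite index on the semigroup $I$ with $s/\rho\neq t/\rho$ such that $\rho\cup\Delta_M$ is a congruence on $M$, where $\Delta_M=\{(x,x):x\in M\}$. A monoid is residually finite if distinct elements are separated by homomorphisms to finite monoids. *)

(* Defs.v *)
From Stdlib Require Import List.

Set Implicit Arguments.

Record monoid := Monoid {
  mcar :> Type;
  mmul : mcar -> mcar -> mcar;
  mone : mcar;
  mmulA : forall x y z, mmul x (mmul y z) = mmul (mmul x y) z;
  mmul1l : forall x, mmul mone x = x;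
  mmul1r : forall x, mmul x mone = x
}.
Arguments mmul {m} _ _.

Record monoid0 := Monoid0 {
  mon :> monoid;
  mzero : mon;
  mmul0l : forall x, @mmul mon mzero x = mzero;
  mmul0r : forall x, @mmul mon x mzero = mzero
}.

Definition finite_monoid (F : monoid) : Prop :=
  exists l : list F, forall x : F, In x l.

Definition submonoid (M : monoid) (S : M -> Prop) : Prop :=
  S (mone M) /\ (forall x y, S x -> S y -> S (mmul x y)).

(* A homomorphism from [S] is represented by a
   function on [M] whose values outside [S] are irrelevant. *)
Definition residually_finite_sub (M : monoid) (S : M -> Prop) : Prop :=
  forall s t, S s -> S t -> s <> t ->
    exists (F : monoid) (f : M -> F),
      finite_monoid F /\
      f (mone M) = mone F /\
      (forall x y, S x -> S y -> f (mmul x y) = mmul (f x) (f y)) /\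
      f s <> f t.

Definition residually_finite (M : monoid) : Prop :=
  forall s t : M, s <> t ->
    exists (F : monoid) (f : M -> F),
      finite_monoid F /\
      f (mone M) = mone F /\
      (forall x y, f (mmul x y) = mmul (f x) (f y)) /\
      f s <> f t.

Definition ideal (M : monoid) (I : M -> Prop) : Prop :=
  (exists x, I x) /\
  (forall x y, I x -> I (mmul x y)) /\
  (forall x y, I y -> I (mmul x y)).

Definition congruence_on (M : monoid) (I : M -> Prop) (rho : M -> M -> Prop)
  : Prop :=
  (forall s, I s -> rho s s) /\
  (forall s t, I s -> I t -> rho s t -> rho t s) /\
  (forall s t u, I s -> I t -> I u -> rho s t -> rho t u -> rho s u) /\
  (forall s t u, I s -> I t -> I u -> rho s t ->
      rho (mmul s u) (mmul t u) /\ rho (mmul u s) (mmul u t)).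

Definition finite_index (M : monoid) (I : M -> Prop) (rho : M -> M -> Prop)
  : Prop :=
  exists l : list M, (forall r, In r l -> I r) /\
    (forall s, I s -> exists r, In r l /\ rho s r).

Definition congruence (M : monoid) (R : M -> M -> Prop) : Prop :=
  (forall x, R x x) /\
  (forall x y, R x y -> R y x) /\
  (forall x y z, R x y -> R y z -> R x z) /\
  (forall x y u, R x y -> R (mmul x u) (mmul y u) /\ R (mmul u x) (mmul u y)).

Definition union_diag (M : monoid) (I : M -> Prop) (rho : M -> M -> Prop)
  : M -> M -> Prop :=
  fun x y => x = y \/ (I x /\ I y /\ rho x y).

Definition rf_compatible (M : monoid) (I : M -> Prop) : Prop :=
  forall s t, I s -> I t -> s <> t ->
    exists rho : M -> M -> Prop,
      congruence_on M I rho /\ finite_index M I rho /\ ~ rho s t /\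
      congruence M (union_diag M I rho).

Definition complement0 (M : monoid0) (I : M -> Prop) : M -> Prop :=
  fun x => ~ I x \/ x = mzero M.

(* Main.v *)
Require Import Defs.
From Stdlib Require Import List Arith Lia Classical ClassicalEpsilon FunctionalExtensionality PropExtensionality ProofIrrelevance.

Lemma quotient_finite (M : monoid) (R : M -> M -> Prop) :
  congruence M R -> (exists l : list M, forall x, exists r, In r l /\ R x r) ->
  exists (F : monoid) (f : M -> F),
    finite_monoid F /\ f (mone M) = mone F /\
    (forall x y, f (mmul x y) = mmul (f x) (f y)) /\
    (forall x y, f x = f y -> R x y).
Proof.
  intros [Rr [Rs [Rt Rc]]] [l Hl].
  set (Q := {P : M -> Prop | exists x, P = R x}).
  set (rep := fun P : Q => proj1_sig (constructive_indefinite_description _ (proj2_sig P))).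
  assert (Hrep : forall P : Q, proj1_sig P = R (rep P)).
  { intros P. unfold rep. destruct (constructive_indefinite_description _ _). simpl. exact e. }
  set (cls := fun x : M => exist (fun P => exists x, P = R x) (R x) (ex_intro _ x eq_refl) : Q).
  assert (Hcls : forall x y, R x y -> cls x = cls y).
  { intros x y H. unfold cls. apply eq_sig_hprop. { intros; apply proof_irrelevance. }
    simpl. apply functional_extensionality; intro z. apply propositional_extensionality.
    split; intro; eauto. }
  assert (Hcls' : forall x y, cls x = cls y -> R x y).
  { intros x y H. assert (E := f_equal (@proj1_sig _ _) H). simpl in E.
    assert (R x x) by apply Rr. rewrite E in H0. apply Rs; auto. }
  assert (Hsurj : forall P : Q, P = cls (rep P)).
  { intros P. apply eq_sig_hprop. { intros; apply proof_irrelevance. } simpl. apply Hrep. }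
  assert (HrepR : forall x, R (rep (cls x)) x).
  { intros x. assert (E := Hrep (cls x)). simpl in E.
    assert (R x x) by apply Rr. rewrite E in H. apply Rs; auto. }
  set (mul := fun P1 P2 : Q => cls (mmul (rep P1) (rep P2))).
  assert (Hmul : forall x y, mul (cls x) (cls y) = cls (mmul x y)).
  { intros x y. unfold mul. apply Hcls. apply Rt with (mmul x (rep (cls y))).
    - apply Rc. apply HrepR.
    - apply Rc. apply HrepR. }
  assert (A : forall a b c : Q, mul a (mul b c) = mul (mul a b) c).
  { intros a b c. rewrite (Hsurj a), (Hsurj b), (Hsurj c). rewrite !Hmul. now rewrite mmulA. }
  assert (L1 : forall a : Q, mul (cls (mone M)) a = a).
  { intros a. rewrite (Hsurj a). rewrite Hmul. now rewrite mmul1l. }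
  assert (R1 : forall a : Q, mul a (cls (mone M)) = a).
  { intros a. rewrite (Hsurj a). rewrite Hmul. now rewrite mmul1r. }
  exists (@Monoid Q mul (cls (mone M)) A L1 R1), cls.
  split; [|split; [|split]].
  - exists (map cls l). intros P. simpl in P. rewrite (Hsurj P).
    destruct (Hl (rep P)) as [r [Hr1 Hr2]]. rewrite (Hcls _ _ Hr2). apply in_map; auto.
  - reflexivity.
  - intros x y. simpl. symmetry. apply Hmul.
  - exact Hcls'.
Qed.

Lemma fin_keys (M : Type) (K : Type) (R : M -> M -> Prop) (KR : M -> K -> Prop) (lk : list K) :
  (forall a, exists k, In k lk /\ KR a k) ->
  (forall a b k, KR a k -> KR b k -> R a b) ->
  exists l : list M, forall a, exists r, In r l /\ R a r.
Proof.
  intros H1 H2.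
  assert (G : exists l : list M, forall a k, In k lk -> KR a k -> exists r, In r l /\ R a r).
  { clear H1. induction lk as [|k lk IH].
    - exists nil. intros a k [].
    - destruct IH as [l Hl].
      destruct (classic (exists x, KR x k)) as [[x0 Hx0]|Hn].
      + exists (x0 :: l). intros a k' [<-|Hin] Hk.
        * exists x0. split; [left; auto|]. eapply H2; eauto.
        * destruct (Hl a k' Hin Hk) as [r [? ?]]. exists r; split; [right|]; auto.
      + exists l. intros a k' [<-|Hin] Hk.
        * exfalso; eauto.
        * eauto. }
  destruct G as [l Hl]. exists l. intros a. destruct (H1 a) as [k [? ?]]. eauto.
Qed.

Fixpoint allL (k m : nat) : list (list nat) :=
  match k with
  | 0 => nil :: nil
  | S k => flat_map (fun j => map (cons j) (allL k m)) (seq 0 m)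
  end.

Lemma allL_ex (k m : nat) (Q : nat -> nat -> Prop) :
  (forall i, i < k -> exists j, j < m /\ Q i j) ->
  exists p, In p (allL k m) /\ forall i, i < k -> Q i (nth i p 0).
Proof.
  revert Q. induction k as [|k IH]; intros Q H.
  - exists nil. split; [left; auto|]. intros; lia.
  - destruct (H 0 ltac:(lia)) as [j [Hj HQ]].
    destruct (IH (fun i => Q (S i))) as [p [Hp HQp]].
    { intros i Hi. apply H. lia. }
    exists (j :: p). split.
    + simpl. apply in_flat_map. exists j. split. apply in_seq. lia. apply in_map. auto.
    + intros [|i] Hi; simpl; auto. apply HQp. lia.
Qed.

Definition Z0 (M : monoid0) (I : M -> Prop) (rho : M -> M -> Prop) (w : M) : Prop :=
  (forall k, I k -> rho (mmul w k) (mzero M) /\ rho (mmul k w) (mzero M)) /\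
  (I w -> rho w (mzero M)).

Definition Peq (M : monoid0) (I : M -> Prop) (rho : M -> M -> Prop) (a b : M) : Prop :=
  forall k, I k -> rho (mmul a k) (mmul b k) /\ rho (mmul k a) (mmul k b).

Definition Rel (M : monoid0) (I : M -> Prop) (rho : M -> M -> Prop) (x y : M) : Prop :=
  (Z0 M I rho x /\ Z0 M I rho y) \/
  (~ Z0 M I rho x /\ ~ Z0 M I rho y /\ Peq M I rho x y /\ (I x <-> I y) /\ (I x -> rho x y)).

Ltac sI := match goal with
  | |- ?P (mmul ?a ?b) => first [
      match goal with H : forall x y, P x -> P (mmul x y) |- _ => apply H; sI end
    | match goal with H : forall x y, P y -> P (mmul x y) |- _ => apply H; sI end ]
  | _ => assumption
  end.

Lemma I_case (M : monoid0) (I : M -> Prop) (rho : M -> M -> Prop) :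
  ideal M I -> submonoid M (complement0 M I) ->
  congruence_on M I rho -> finite_index M I rho ->
  congruence M (union_diag M I rho) ->
  congruence M (Rel M I rho) /\
  (exists l : list M, forall x, exists r, In r l /\ Rel M I rho x r) /\
  (forall s t, I s -> I t -> Rel M I rho s t -> rho s t).
Proof.
  intros [[x0 Hx0] [HIl HIr]] [_ HN] [rR [rS [rT _]]] [l [Hl1 Hl2]] [_ [_ [_ UC]]].
  set (z := mzero M).
  assert (z0l : forall u : M, mmul z u = z) by (intros; apply mmul0l).
  assert (z0r : forall u : M, mmul u z = z) by (intros; apply mmul0r).
  assert (I0 : I z). { unfold z. rewrite <- (mmul0r M x0). apply HIl; auto. }
  assert (Nmul : forall x y : M, ~ I x -> ~ I y -> ~ I (mmul x y) \/ mmul x y = z).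
  { intros x y Hx Hy. apply (HN x y); left; auto. }
  assert (UD : forall a b u : M, I a -> I b -> rho a b ->
     rho (mmul a u) (mmul b u) /\ rho (mmul u a) (mmul u b)).
  { intros a b u Ha Hb Hab.
    destruct (UC a b u) as [H1 H2]. { right; auto. }
    split; [destruct H1 as [E|[_ [_ E]]]|destruct H2 as [E|[_ [_ E]]]]; auto;
      rewrite E; apply rR; sI. }
  assert (Tr : forall a b c, I a -> I b -> I c -> rho a b -> rho b c -> rho a c).
  { intros; eapply rT; eauto. }
  assert (Sy : forall a b, I a -> I b -> rho a b -> rho b a). { intros; apply rS; auto. }
  assert (Z0z : Z0 M I rho z).
  { split. intros k Hk. unfold z. rewrite mmul0l, mmul0r. split; apply rR; auto.
    intros; apply rR; auto. }
  assert (Z0r : forall x u, Z0 M I rho x -> Z0 M I rho (mmul x u)).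
  { intros x u [Hx1 Hx2]. split.
    - intros k Hk. split.
      + rewrite <- mmulA. apply Hx1. sI.
      + rewrite mmulA. destruct (Hx1 k Hk) as [_ H].
        assert (E := proj1 (UD (mmul k x) z u ltac:(sI) I0 H)). rewrite z0l in E. exact E.
    - intros Hxu. destruct (classic (I x)) as [Ix|nIx].
      + assert (E := proj1 (UD _ _ u Ix I0 (Hx2 Ix))). rewrite z0l in E. exact E.
      + destruct (classic (I u)) as [Iu|nIu].
        * apply Hx1; auto.
        * destruct (Nmul x u nIx nIu) as [C|E]; [contradiction|]. rewrite E; apply rR; auto. }
  assert (Z0l : forall x u, Z0 M I rho x -> Z0 M I rho (mmul u x)).
  { intros x u [Hx1 Hx2]. split.
    - intros k Hk. split.
      + rewrite <- mmulA. destruct (Hx1 k Hk) as [H _].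
        assert (E := proj2 (UD (mmul x k) z u ltac:(sI) I0 H)). rewrite z0r in E. exact E.
      + rewrite mmulA. apply Hx1. sI.
    - intros Hxu. destruct (classic (I x)) as [Ix|nIx].
      + assert (E := proj2 (UD _ _ u Ix I0 (Hx2 Ix))). rewrite z0r in E. exact E.
      + destruct (classic (I u)) as [Iu|nIu].
        * apply Hx1; auto.
        * destruct (Nmul u x nIu nIx) as [C|E]; [contradiction|]. rewrite E; apply rR; auto. }
  assert (Psym : forall a b, Peq M I rho a b -> Peq M I rho b a).
  { intros a b H k Hk. destruct (H k Hk). split; apply Sy; auto; sI. }
  assert (Ptr : forall a b c, Peq M I rho a b -> Peq M I rho b c -> Peq M I rho a c).
  { intros a b c H1 H2 k Hk. destruct (H1 k Hk), (H2 k Hk). split; [apply (Tr _ (mmul b k) _)|apply (Tr _ (mmul k b) _)]; auto; sI. }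
  assert (Prefl : forall a, Peq M I rho a a).
  { intros a k Hk. split; apply rR; sI. }
  assert (Pmul : forall x y u, Peq M I rho x y ->
     Peq M I rho (mmul x u) (mmul y u) /\ Peq M I rho (mmul u x) (mmul u y)).
  { intros x y u H. split; intros k Hk; split.
    - rewrite <- !mmulA. apply H. sI.
    - rewrite !mmulA. apply UD; [sI|sI|]. apply H; auto.
    - rewrite <- !mmulA. apply UD; [sI|sI|]. apply H; auto.
    - rewrite !mmulA. apply H. sI. }
  assert (Ztr : forall a b, Peq M I rho a b -> (I b -> (I a /\ rho a b) \/ b = z) ->
     Z0 M I rho a -> Z0 M I rho b).
  { intros a b Hp Hc [Z1 Z2]. split.
    - intros k Hk. destruct (Hp k Hk), (Z1 k Hk). split; [apply (Tr _ (mmul a k) _)|apply (Tr _ (mmul k a) _)]; try sI; auto; apply Sy; auto; sI.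
    - intros Ib. destruct (Hc Ib) as [[Ia Hab]|E].
      + apply (Tr _ a _); auto.
      + rewrite E; apply rR; auto. }
  assert (L : forall a b, Peq M I rho a b ->
     (I a /\ I b /\ rho a b) \/ (~ I a /\ ~ I b) \/ (a = z /\ ~ I b) \/ (~ I a /\ b = z) ->
     Rel M I rho a b).
  { intros a b Hp Hd.
    assert (Hab : Z0 M I rho a -> Z0 M I rho b).
    { apply Ztr; auto. intros Ib.
      destruct Hd as [[? [? ?]]|[[? ?]|[[? ?]|[? ?]]]]; auto; contradiction. }
    assert (Hba : Z0 M I rho b -> Z0 M I rho a).
    { apply Ztr; auto. intros Ia.
      destruct Hd as [[? [? ?]]|[[? ?]|[[? ?]|[? ?]]]]; auto; try contradiction. }
    destruct (classic (Z0 M I rho a)) as [Za|nZa].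
    - left; auto.
    - assert (nZb : ~ Z0 M I rho b) by auto.
      right. split; [auto|split; [auto|split; [auto|]]].
      destruct Hd as [[? [? ?]]|[[? ?]|[[? ?]|[? ?]]]].
      + split; [tauto|auto].
      + split; [tauto|intros; contradiction].
      + subst a. contradiction.
      + subst b. contradiction. }
  assert (Dmul : forall x y u, ~ I x -> ~ I u -> ~ I y ->
     (I (mmul x u) /\ I (mmul y u) /\ rho (mmul x u) (mmul y u)) \/
     (~ I (mmul x u) /\ ~ I (mmul y u)) \/ (mmul x u = z /\ ~ I (mmul y u)) \/
     (~ I (mmul x u) /\ mmul y u = z)).
  { intros x y u Hx Hu Hy.
    destruct (Nmul x u Hx Hu) as [A1|A1]; destruct (Nmul y u Hy Hu) as [A2|A2]; auto.
    left. rewrite A1, A2. split; [auto|split; [auto|apply rR; auto]]. }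
  assert (Dmul' : forall x y u, ~ I x -> ~ I u -> ~ I y ->
     (I (mmul u x) /\ I (mmul u y) /\ rho (mmul u x) (mmul u y)) \/
     (~ I (mmul u x) /\ ~ I (mmul u y)) \/ (mmul u x = z /\ ~ I (mmul u y)) \/
     (~ I (mmul u x) /\ mmul u y = z)).
  { intros x y u Hx Hu Hy.
    destruct (Nmul u x Hu Hx) as [A1|A1]; destruct (Nmul u y Hu Hy) as [A2|A2]; auto.
    left. rewrite A1, A2. split; [auto|split; [auto|apply rR; auto]]. }
  split; [|split].
  -
    split; [|split; [|split]].
    + intros x. destruct (classic (Z0 M I rho x)); [left; auto|right].
      split; [auto|split; [auto|split; [apply Prefl|split; [tauto|intros; apply rR; auto]]]].
    + intros x y [[? ?]|[? [? [? [? H]]]]]; [left; auto|right].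
      split; [auto|split; [auto|split; [apply Psym; auto|split; [tauto|]]]].
      intros Iy. apply Sy; tauto.
    + intros x y w [[? ?]|[? [? [P1 [? Q1]]]]] [[? ?]|[? [? [P2 [? Q2]]]]];
        try contradiction; [left; auto|right].
      split; [auto|split; [auto|split; [apply (Ptr _ y _); auto|split; [tauto|]]]].
      intros Ix. apply (Tr _ y _); auto; tauto.
    + intros x y u [[Zx Zy]|[nZx [nZy [Hp [Hi Hr]]]]].
      * split; left; auto.
      * destruct (Pmul x y u Hp) as [P1 P2]. split.
        -- apply L; auto. destruct (classic (I x)) as [Ix|nIx].
           ++ assert (Iy : I y) by tauto. left. split; [sI|split; [sI|]]. apply UD; auto.
           ++ assert (nIy : ~ I y) by tauto. destruct (classic (I u)) as [Iu|nIu].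
              ** left. split; [sI|split; [sI|]]. apply Hp; auto.
              ** apply Dmul; auto.
        -- apply L; auto. destruct (classic (I x)) as [Ix|nIx].
           ++ assert (Iy : I y) by tauto. left. split; [sI|split; [sI|]]. apply UD; auto.
           ++ assert (nIy : ~ I y) by tauto. destruct (classic (I u)) as [Iu|nIu].
              ** left. split; [sI|split; [sI|]]. apply Hp; auto.
              ** apply Dmul'; auto.
  -
    set (n := length l).
    set (rr := fun i => nth i l z).
    assert (Hrr : forall i, i < n -> I (rr i)).
    { intros i Hi. apply Hl1. apply nth_In. auto. }
    assert (Hrr' : forall j, I (rr j)).
    { intros j. unfold rr. destruct (Nat.lt_ge_cases j n) as [Hj|Hj].
      - apply Hl1, nth_In; auto.
      - rewrite nth_overflow; auto. }
    assert (Hidx : forall x, I x -> exists j, j < n /\ rho x (rr j)).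
    { intros x Ix. destruct (Hl2 x Ix) as [r [Hr Hxr]].
      destruct (In_nth l r z Hr) as [j [Hj Ej]]. exists j. split; auto. unfold rr. rewrite Ej. auto. }
    set (KR := fun (a : M) (k : bool * bool * nat * list nat * list nat) =>
      match k with (zz, bb, c, p, q) =>
        (zz = true /\ Z0 M I rho a) \/
        (zz = false /\ ~ Z0 M I rho a /\
         (forall i, i < n -> rho (mmul a (rr i)) (rr (nth i p 0))) /\
         (forall i, i < n -> rho (mmul (rr i) a) (rr (nth i q 0))) /\
         (bb = true <-> I a) /\ (I a -> rho a (rr c)))
      end).
    apply (@fin_keys _ _ (Rel M I rho) KR
      (list_prod (list_prod (list_prod (list_prod (true :: false :: nil) (true :: false :: nil))
         (seq 0 (S n))) (allL n n)) (allL n n))).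
    + intros a.
      destruct (allL_ex n n (fun i j => rho (mmul a (rr i)) (rr j))) as [p [Hp1 Hp2]].
      { intros i Hi. apply Hidx. apply HIr, Hrr; auto. }
      destruct (allL_ex n n (fun i j => rho (mmul (rr i) a) (rr j))) as [q [Hq1 Hq2]].
      { intros i Hi. apply Hidx. apply HIl, Hrr; auto. }
      destruct (classic (Z0 M I rho a)) as [Za|nZa].
      * exists (true, true, 0, p, q). split.
        { repeat (apply in_prod_iff; split); try (apply in_seq; lia); try assumption; simpl; auto. }
        simpl. left; auto.
      * destruct (classic (I a)) as [Ia|nIa].
        -- destruct (Hidx a Ia) as [c [Hc Hac]].
           exists (false, true, c, p, q). split.
           { repeat (apply in_prod_iff; split); try (apply in_seq; lia); try assumption; simpl; auto. }
           simpl. right. repeat split; auto.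
        -- exists (false, false, 0, p, q). split.
           { repeat (apply in_prod_iff; split); try (apply in_seq; lia); try assumption; simpl; auto. }
           simpl. right. repeat split; auto; try discriminate; intros; contradiction.
    + intros a b [[[[zz bb] c] p] q] Ha Hb. simpl in Ha, Hb.
      destruct Ha as [[E1 Za]|[E1 [nZa [Pa [Qa [Ba Ca]]]]]];
      destruct Hb as [[E2 Zb]|[E2 [nZb [Pb [Qb [Bb Cb]]]]]]; subst zz; try discriminate.
      * left; auto.
      * right. split; [auto|split; [auto|split; [|split; [tauto|]]]].
        -- intros k Hk. destruct (Hidx k Hk) as [i [Hi Hki]].
           assert (Ir := Hrr i Hi).
           assert (Ip := Hrr' (nth i p 0)). assert (Iq := Hrr' (nth i q 0)).
           split.
           ++ apply (Tr _ (mmul a (rr i)) _); try sI.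
              ** apply (proj2 (UD k (rr i) a Hk Ir Hki)).
              ** apply (Tr _ (rr (nth i p 0)) _); try sI; auto.
                 apply (Tr _ (mmul b (rr i)) _); try sI; auto.
                 all: apply Sy; try sI; auto; apply (proj2 (UD k (rr i) b Hk Ir Hki)).
           ++ apply (Tr _ (mmul (rr i) a) _); try sI.
              ** apply (proj1 (UD k (rr i) a Hk Ir Hki)).
              ** apply (Tr _ (rr (nth i q 0)) _); try sI; auto.
                 apply (Tr _ (mmul (rr i) b) _); try sI; auto.
                 all: apply Sy; try sI; auto; apply (proj1 (UD k (rr i) b Hk Ir Hki)).
        -- intros Ia. assert (Ib : I b) by tauto.
           apply (Tr _ (rr c) _); auto.
  - intros s t Is It [[[Zs1 Zs2] [Zt1 Zt2]]|[_ [_ [_ [_ H]]]]]; auto.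
    eapply Tr; [| | |apply Zs2; auto|apply Sy; [| |apply Zt2]]; auto.
Qed.

Theorem mainTheorem10 (M : monoid0) (I : M -> Prop) :
  ideal M I -> rf_compatible M I -> submonoid M (complement0 M I) ->
  (residually_finite M <-> residually_finite_sub M (complement0 M I)).
Proof.
  intros HI Hrf HN. split.
  - intros H s t _ _ Hst. destruct (H s t Hst) as [F [f [? [? [? ?]]]]].
    exists F, f. repeat split; auto.
  - intros H s t Hst.
    pose proof HI as [[x0 Hx0] [HIl HIr]].
    set (z := mzero M).
    assert (I0 : I z). { unfold z. rewrite <- (mmul0r M x0). apply HIl; auto. }
    destruct (classic (I s /\ I t)) as [[Is It]|Hn].
    + destruct (Hrf s t Is It Hst) as [rho [Hc [Hf [Hns Hu]]]].
      destruct (I_case M I rho HI HN Hc Hf Hu) as [RC [RF RS]].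
      destruct (quotient_finite _ _ RC RF) as [F [f [? [? [? Hsep]]]]].
      exists F, f. split; [auto|split; [auto|split; [auto|]]]. intros E. apply Hns, RS; auto.
    + set (phi := fun x : M => if excluded_middle_informative (I x) then z else x).
      assert (PN : forall x, complement0 M I (phi x)).
      { intros x. unfold phi. destruct (excluded_middle_informative (I x)); [right|left]; auto. }
      assert (P1 : phi (mone M) = mone M).
      { unfold phi. destruct (excluded_middle_informative (I (mone M))) as [Y|]; auto.
        destruct (proj1 HN) as [C|C]; [contradiction|]. rewrite C; reflexivity. }
      assert (PM : forall x y, phi (mmul x y) = mmul (phi x) (phi y)).
      { intros x y. unfold phi.
        destruct (excluded_middle_informative (I x)) as [Ix|nIx].
        - destruct (excluded_middle_informative (I (mmul x y))) as [_|C]; [|exfalso; apply C, HIl; auto].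
          destruct (excluded_middle_informative (I y)); unfold z; symmetry; apply mmul0l.
        - destruct (excluded_middle_informative (I y)) as [Iy|nIy].
          + destruct (excluded_middle_informative (I (mmul x y))) as [_|C]; [|exfalso; apply C, HIr; auto].
            unfold z; symmetry; apply mmul0r.
          + destruct (excluded_middle_informative (I (mmul x y))) as [Ixy|]; auto.
            destruct (proj2 HN x y (or_introl nIx) (or_introl nIy)) as [C|C]; [contradiction|].
            rewrite C; reflexivity. }
      assert (Hph : phi s <> phi t).
      { unfold phi. destruct (excluded_middle_informative (I s));
          destruct (excluded_middle_informative (I t));
          intros E; first [tauto | (rewrite <- E in *; contradiction) | (rewrite E in *; contradiction)]. }
      destruct (H (phi s) (phi t) (PN s) (PN t) Hph) as [F [g [Hfin [G1 [GM Gst]]]]].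
      exists F, (fun x => g (phi x)). split; [auto|split; [|split]].
      * rewrite P1; auto.
      * intros x y. rewrite PM. apply GM; auto.
      * auto.
Qed.
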